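(* The vertical extension $(X^*,\mathcal L^*,d^* )$ of a reduced Birkhoff--Beatley system $(X,\mathcal L,d)$ is a reduced Birkhoff--Beatley system.
   Context: A reduced Birkhoff--Beatley system is a triple $(X,\mathcal L,d)$ where $X$ is a set with at least two elements (points), $\mathcal L$ is a family of subsets of $X$ (lines), and $d\colon X^2\to\mathbb R$ is a function (metric), such that: (i) any two distinct points of $X$ lie in a unique line of $\mathcal L$; (ii) for each $\ell\in\mathcal L$ there is a bijection $c\colon\mathbb R\to\ell$ (a ruler) with $d(c(t),c(s))=|t-s|$ for all $s,t$. The vertical extension of $(X,\mathcal L,d)$ is $(X^*,\mathcal L^*,d^* )$ where $X^*=X\times\mathbb R$, $d^*((x_0,y_0),(x_1,y_1))=\sqrt{d(x_0,x_1)^2+(y_0-y_1)^2}$, and $\mathcal L^*$ consists of the following lines, one for each pair of distinct points $(x_0,y_0)\ne(x_1,y_1)$ of $X^*$: if $x_0\neq x_1$, let $\ell\in\mathcal L$ be the line through $x_0,x_1$, $c\colon\mathbb R\to\ell$ a ruler with $c(s_0)=x_0$, $c(s_1)=x_1$, $a:=((s_0-s_1)^2+(y_0-y_1)^2)^{-1/2}$, and the line is $\{c^*(t)\mid t\in\mathbb R\}$ with $c^*(t)=\bigl(c(at(s_1-s_0)+s_0),\,at(y_1-y_0)+y_0\bigr)$; if $x_0=x_1$ (so $y_0\neq y_1$), the line is $\{x_0\}\times\mathbb R$. *)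

(* Defs.v *)
From Stdlib Require Import Reals.
Open Scope R_scope.

Definition is_ruler {X : Type} (d : X -> X -> R) (l : X -> Prop) (c : R -> X) : Prop :=
  (forall t, l (c t)) /\
  (forall x, l x -> exists t, c t = x) /\
  (forall t s, c t = c s -> t = s) /\
  (forall t s, d (c t) (c s) = Rabs (t - s)).

Definition reduced_BB {X : Type} (L : (X -> Prop) -> Prop) (d : X -> X -> R) : Prop :=
  (exists x y : X, x <> y) /\
  (forall x y : X, x <> y -> exists! l : X -> Prop, L l /\ l x /\ l y) /\
  (forall l, L l -> exists c : R -> X, is_ruler d l c).

Definition vext_d {X : Type} (d : X -> X -> R) (p q : X * R) : R :=
  sqrt (d (fst p) (fst q) ^ 2 + (snd p - snd q) ^ 2).

Definition vext_L {X : Type} (L : (X -> Prop) -> Prop) (d : X -> X -> R)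
  (S : X * R -> Prop) : Prop :=
  exists (x0 : X) (y0 : R) (x1 : X) (y1 : R),
    (x0, y0) <> (x1, y1) /\
    ( (x0 <> x1 /\
       exists (l : X -> Prop) (c : R -> X) (s0 s1 : R),
         L l /\ l x0 /\ l x1 /\ is_ruler d l c /\ c s0 = x0 /\ c s1 = x1 /\
         let a := / sqrt ((s0 - s1) ^ 2 + (y0 - y1) ^ 2) in
         S = (fun p => exists t : R,
                p = (c (a * t * (s1 - s0) + s0), a * t * (y1 - y0) + y0)))
      \/
      (x0 = x1 /\ S = (fun p => fst p = x0)) ).

(* Main.v *)
Require Import Defs.
From Stdlib Require Import Reals.
From Stdlib Require Import Lra Psatz Classical FunctionalExtensionality PropExtensionality.
Open Scope R_scope.

Lemma sqrt_sq_abs (x : R) : sqrt (x ^ 2) = Rabs x.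
Proof. rewrite <- pow2_abs. apply sqrt_pow2. apply Rabs_pos. Qed.

Lemma abs_sq (x y : R) : Rabs x = Rabs y -> x ^ 2 = y ^ 2.
Proof. intro H. rewrite <- (pow2_abs x), <- (pow2_abs y), H. reflexivity. Qed.

Lemma aa_props (u v : R) : u <> 0 ->
  / sqrt (u ^ 2 + v ^ 2) <> 0 /\ (/ sqrt (u ^ 2 + v ^ 2)) ^ 2 * (u ^ 2 + v ^ 2) = 1.
Proof.
  intro Hu.
  assert (HW : 0 < u ^ 2 + v ^ 2).
  { assert (0 < u ^ 2) by (simpl; rewrite Rmult_1_r; apply Rsqr_pos_lt; auto). assert (0 <= v ^ 2) by apply pow2_ge_0. lra. }
  assert (Hr : 0 < sqrt (u ^ 2 + v ^ 2)) by (apply sqrt_lt_R0; auto).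
  assert (Hrr : sqrt (u ^ 2 + v ^ 2) * sqrt (u ^ 2 + v ^ 2) = u ^ 2 + v ^ 2)
    by (apply sqrt_sqrt; lra).
  split.
  - apply Rinv_neq_0_compat; lra.
  - set (r := sqrt (u ^ 2 + v ^ 2)) in *. rewrite <- Hrr. field. lra.
Qed.

Lemma iso_aff (s0 s1 s t : R) :
  Rabs (s1 - s0) = 1 -> Rabs (s - s0) = Rabs t -> Rabs (s - s1) = Rabs (t - 1) ->
  s = (s1 - s0) * t + s0.
Proof.
  intros H1 H2 H3. rewrite <- Rabs_R1 in H1. apply abs_sq in H1. apply abs_sq in H2. apply abs_sq in H3.
  assert (E : (s - s0) * (s1 - s0) = t) by nra.
  assert (E2 : (s1 - s0) ^ 2 = 1) by nra.
  nra.
Qed.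

Lemma ruler_aff {X : Type} (d : X -> X -> R) (l : X -> Prop) (c c' : R -> X) :
  is_ruler d l c -> is_ruler d l c' -> exists e k, forall t, c' t = c (e * t + k).
Proof.
  intros (Hin & Hsur & Hinj & Hd) (Hin' & Hsur' & Hinj' & Hd').
  destruct (Hsur (c' 0) (Hin' 0)) as [s0 Hs0].
  destruct (Hsur (c' 1) (Hin' 1)) as [s1 Hs1].
  exists (s1 - s0), s0. intro t.
  destruct (Hsur (c' t) (Hin' t)) as [s Hs].
  rewrite <- Hs. f_equal. apply iso_aff.
  - rewrite <- Hd, Hs1, Hs0, Hd'. replace (1 - 0) with 1 by ring. apply Rabs_R1.
  - rewrite <- Hd, Hs, Hs0, Hd'. replace (t - 0) with t by ring. reflexivity.
  - rewrite <- Hd, Hs, Hs1, Hd'. reflexivity.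
Qed.

Lemma line_incl (A B C D A' B' C' D' t1 t2 t1' t2' : R) :
  A*t1+B = A'*t1'+B' -> C*t1+D = C'*t1'+D' -> A*t2+B = A'*t2'+B' -> C*t2+D = C'*t2'+D' ->
  A*t1+B <> A*t2+B ->
  forall t, exists t', A*t+B = A'*t'+B' /\ C*t+D = C'*t'+D'.
Proof.
  intros H1 H2 H3 H4 H5 t.
  assert (Ht : t2 - t1 <> 0) by (intro; apply H5; replace t2 with t1 by lra; reflexivity).
  exists (t1' + (t - t1) * (t2' - t1') / (t2 - t1)).
  assert (EA : A' * (t2' - t1') = A * (t2 - t1)) by lra.
  assert (EC : C' * (t2' - t1') = C * (t2 - t1)) by lra.
  split.
  - replace (A' * (t1' + (t - t1) * (t2' - t1') / (t2 - t1)) + B')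
      with (A' * t1' + B' + (t - t1) * (A' * (t2' - t1')) / (t2 - t1)) by (field; auto).
    rewrite EA. rewrite <- H1. field. auto.
  - replace (C' * (t1' + (t - t1) * (t2' - t1') / (t2 - t1)) + D')
      with (C' * t1' + D' + (t - t1) * (C' * (t2' - t1')) / (t2 - t1)) by (field; auto).
    rewrite EC. rewrite <- H2. field. auto.
Qed.

Lemma set_incl {X : Type} (c : R -> X) (Hinj : forall t s, c t = c s -> t = s)
  (A B C D A' B' C' D' t1 t2 t1' t2' : R) (p q : X * R) :
  p = (c (A*t1+B), C*t1+D) -> p = (c (A'*t1'+B'), C'*t1'+D') ->
  q = (c (A*t2+B), C*t2+D) -> q = (c (A'*t2'+B'), C'*t2'+D') -> fst p <> fst q ->
  forall z, (exists t, z = (c (A*t+B), C*t+D)) -> (exists t, z = (c (A'*t+B'), C'*t+D')).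
Proof.
  intros Hp Hp' Hq Hq' Hne z [t Hz].
  rewrite Hp in Hp'. rewrite Hq in Hq'.
  injection Hp'; intros E2 E1. injection Hq'; intros F2 F1.
  apply Hinj in E1. apply Hinj in F1.
  assert (Hd : A*t1+B <> A*t2+B).
  { intro Heq. apply Hne. rewrite Hp, Hq. simpl. rewrite Heq. reflexivity. }
  destruct (line_incl A B C D A' B' C' D' t1 t2 t1' t2' E1 E2 F1 F2 Hd t) as [t' [G1 G2]].
  exists t'. rewrite Hz, G1, G2. reflexivity.
Qed.

Lemma set_eq {X : Type} (c : R -> X) (Hinj : forall t s, c t = c s -> t = s)
  (A B C D A' B' C' D' t1 t2 t1' t2' : R) (p q : X * R) :
  p = (c (A*t1+B), C*t1+D) -> p = (c (A'*t1'+B'), C'*t1'+D') ->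
  q = (c (A*t2+B), C*t2+D) -> q = (c (A'*t2'+B'), C'*t2'+D') -> fst p <> fst q ->
  (fun z => exists t, z = (c (A*t+B), C*t+D)) = (fun z => exists t, z = (c (A'*t+B'), C'*t+D')).
Proof.
  intros Hp Hp' Hq Hq' Hne. apply functional_extensionality. intro z.
  apply propositional_extensionality. split.
  - exact (set_incl c Hinj A B C D A' B' C' D' t1 t2 t1' t2' p q Hp Hp' Hq Hq' Hne z).
  - exact (set_incl c Hinj A' B' C' D' A B C D t1' t2' t1 t2 p q Hp' Hp Hq' Hq Hne z).
Qed.

Lemma param_ext {X : Type} (f g : R -> X) : (forall t, f t = g t) ->
  (fun z => exists t, z = f t) = (fun z => exists t, z = g t).
Proof.
  intro H. assert (f = g) by (apply functional_extensionality; auto). subst; reflexivity.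
Qed.

Lemma d_refl {X : Type} (L : (X -> Prop) -> Prop) (d : X -> X -> R) :
  reduced_BB L d -> forall x, d x x = 0.
Proof.
  intros [[a [b Hab]] [Hu Hr]] x.
  assert (exists y, x <> y) as [y Hy].
  { destruct (classic (x = a)). subst. exists b; auto. exists a; auto. }
  destruct (Hu x y Hy) as [l [[Hl [Hx _]] _]].
  destruct (Hr l Hl) as [c (Hin & Hsur & Hinj & Hd)].
  destruct (Hsur x Hx) as [t Ht]. rewrite <- Ht, Hd.
  replace (t - t) with 0 by ring. apply Rabs_R0.
Qed.

Theorem lemma3 (X : Type) (L : (X -> Prop) -> Prop) (d : X -> X -> R) :
  reduced_BB L d -> reduced_BB (vext_L L d) (vext_d d).
Proof.
  intro HBB. pose proof (d_refl L d HBB) as Hdr.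
  destruct HBB as [[a [b Hab]] [Hu Hr]].
  split; [|split].
  - exists (a, 0), (a, 1). intro H. injection H. lra.
  - intros [x0 y0] [x1 y1] Hne. destruct (classic (x0 = x1)) as [E|E].
    + subst x1. assert (Hy : y0 <> y1) by (intro; subst; auto).
      exists (fun p => fst p = x0). split.
      * split; [|split; reflexivity].
        exists x0, y0, x0, y1. split; auto.
      * intros S' [HS' [Hp Hq]].
        destruct HS' as (x0'&y0'&x1'&y1'&Hne'&[[E' (l'&c'&s0'&s1'&Hl'&Hl0&Hl1&Hc'&Hs0&Hs1&HS)] | [E' HS]]).
        -- exfalso. cbv zeta in HS. subst S'.
           destruct Hc' as (Hin & Hsur & Hinj & Hd).
           assert (Hu' : s0' - s1' <> 0).
           { intro. apply E'. rewrite <- Hs0, <- Hs1. f_equal. lra. }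
           destruct (aa_props (s0' - s1') (y0' - y1') Hu') as [Ha _].
           destruct Hp as [tp Hp]. destruct Hq as [tq Hq].
           set (aa := / sqrt ((s0' - s1') ^ 2 + (y0' - y1') ^ 2)) in *.
           injection Hp; intros P2 P1. injection Hq; intros Q2 Q1.
           rewrite P1 in Q1. apply Hinj in Q1.
           assert (aa * (s1' - s0') <> 0).
           { apply Rmult_integral_contrapositive. split; auto. lra. }
           assert (tp = tq).
           { apply Rmult_eq_reg_l with (aa*(s1'-s0')); [|auto].
             transitivity (aa*tp*(s1'-s0')); [ring|]. transitivity (aa*tq*(s1'-s0')); [lra|ring]. } subst tq. apply Hy. rewrite P2, Q2. reflexivity.
        -- subst S'. simpl in Hp. rewrite Hp. reflexivity.
    + destruct (Hu x0 x1 E) as [l [[Hl [H0 H1]] Huniq]].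
      destruct (Hr l Hl) as [c Hc].
      pose proof Hc as (Hin & Hsur & Hinj & Hd).
      destruct (Hsur x0 H0) as [s0 Hs0].
      destruct (Hsur x1 H1) as [s1 Hs1].
      assert (Hu' : s0 - s1 <> 0).
      { intro. apply E. rewrite <- Hs0, <- Hs1. f_equal. lra. }
      destruct (aa_props (s0 - s1) (y0 - y1) Hu') as [Ha _].
      pose (aa := / sqrt ((s0 - s1) ^ 2 + (y0 - y1) ^ 2)).
      assert (Ha' : aa <> 0) by exact Ha.
      assert (ES : (fun p => exists t : R, p = (c (aa * t * (s1 - s0) + s0), aa * t * (y1 - y0) + y0))
        = (fun p => exists t, p = (c ((aa * (s1 - s0)) * t + s0), (aa * (y1 - y0)) * t + y0))).
      { apply param_ext. intro t. f_equal; [f_equal|]; ring. }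
      assert (P0 : (x0, y0) = (c ((aa * (s1 - s0)) * 0 + s0), (aa * (y1 - y0)) * 0 + y0)).
      { replace ((aa * (s1 - s0)) * 0 + s0) with s0 by ring.
        replace ((aa * (y1 - y0)) * 0 + y0) with y0 by ring. rewrite Hs0. reflexivity. }
      assert (P1 : (x1, y1) = (c ((aa * (s1 - s0)) * / aa + s0), (aa * (y1 - y0)) * / aa + y0)).
      { replace ((aa * (s1 - s0)) * / aa + s0) with s1 by (field; auto).
        replace ((aa * (y1 - y0)) * / aa + y0) with y1 by (field; auto). rewrite Hs1. reflexivity. }
      exists (fun p => exists t : R, p = (c (aa * t * (s1 - s0) + s0), aa * t * (y1 - y0) + y0)).
      split.
      * split; [|split].
        -- exists x0, y0, x1, y1. split; auto. left. split; auto.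
           exists l, c, s0, s1. repeat split; auto.
        -- exists 0. rewrite P0. f_equal; [f_equal|]; ring.
        -- exists (/ aa). rewrite P1. f_equal; [f_equal|]; ring.
      * intros S' [HS' [Hp Hq]].
        destruct HS' as (x0'&y0'&x1'&y1'&Hne'&[[E' (l'&c'&s0'&s1'&Hl'&Hl0&Hl1&Hc'&Hs0'&Hs1'&HS)] | [E' HS]]).
        -- cbv zeta in HS. subst S'.
           set (a' := / sqrt ((s0' - s1') ^ 2 + (y0' - y1') ^ 2)) in *.
           assert (Hl'0 : l' x0).
           { destruct Hp as [tp Hp]. injection Hp; intros _ ->. apply Hc'. }
           assert (Hl'1 : l' x1).
           { destruct Hq as [tq Hq]. injection Hq; intros _ ->. apply Hc'. }
           assert (l = l') by (apply Huniq; auto). subst l'.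
           destruct (ruler_aff d l c c' Hc Hc') as [e [k Hek]].
           assert (ES' : (fun p => exists t : R, p = (c' (a' * t * (s1' - s0') + s0'), a' * t * (y1' - y0') + y0'))
             = (fun p => exists t, p = (c ((e * (a' * (s1' - s0'))) * t + (e * s0' + k)), (a' * (y1' - y0')) * t + y0'))).
           { apply param_ext. intro t. rewrite Hek. f_equal; [f_equal|]; ring. }
           rewrite ES', ES.
           destruct Hp as [tp Hp]. destruct Hq as [tq Hq].
           rewrite Hek in Hp, Hq.
           apply (set_eq c Hinj _ _ _ _ _ _ _ _ 0 (/ aa) tp tq (x0, y0) (x1, y1)); auto.
           ++ rewrite Hp. f_equal; [f_equal|]; ring.
           ++ rewrite Hq. f_equal; [f_equal|]; ring.
        -- exfalso. subst S'. simpl in Hp, Hq. apply E. congruence.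
  - intros S [x0 [y0 [x1 [y1 [Hne [[E (l&c&s0&s1&Hl&Hl0&Hl1&Hc&Hs0&Hs1&HS)] | [E HS]]]]]]].
    + cbv zeta in HS. subst S.
      destruct Hc as (Hin & Hsur & Hinj & Hd).
      assert (Hu' : s0 - s1 <> 0).
      { intro. apply E. rewrite <- Hs0, <- Hs1. f_equal. lra. }
      destruct (aa_props (s0 - s1) (y0 - y1) Hu') as [Ha Ha2].
      set (aa := / sqrt ((s0 - s1) ^ 2 + (y0 - y1) ^ 2)) in *.
      exists (fun t => (c (aa * t * (s1 - s0) + s0), aa * t * (y1 - y0) + y0)).
      split; [|split; [|split]].
      * intro t. exists t. reflexivity.
      * intros z [t Hz]. exists t. auto.
      * intros t s H. injection H; intros _ H1. apply Hinj in H1.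
        assert (aa * (s1 - s0) <> 0).
        { apply Rmult_integral_contrapositive. split; auto. lra. }
        apply Rmult_eq_reg_l with (aa*(s1-s0)); [|auto].
        transitivity (aa*t*(s1-s0)); [ring|]. transitivity (aa*s*(s1-s0)); [lra|ring].
      * intros t s. unfold vext_d; cbn [fst snd]. rewrite Hd. rewrite pow2_abs.
        replace ((aa * t * (s1 - s0) + s0 - (aa * s * (s1 - s0) + s0)) ^ 2 +
                 (aa * t * (y1 - y0) + y0 - (aa * s * (y1 - y0) + y0)) ^ 2)
          with ((t - s) ^ 2 * (aa ^ 2 * ((s0 - s1) ^ 2 + (y0 - y1) ^ 2))) by ring.
        rewrite Ha2, Rmult_1_r. apply sqrt_sq_abs.
    + subst S. exists (fun t => (x0, t)). split; [|split; [|split]].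
      * intro t. reflexivity.
      * intros [z w] Hz. simpl in Hz. subst z. exists w. reflexivity.
      * intros t s H. injection H. auto.
      * intros t s. unfold vext_d; cbn [fst snd]. rewrite Hdr.
        replace (0 ^ 2 + (t - s) ^ 2) with ((t - s) ^ 2) by ring. apply sqrt_sq_abs.
Qed.
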